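(* Let $\mathcal{D}$ be a distribution supported on $[0,1]$ with largest median $\nu=\sup\{y:\Pr_{x\sim\mathcal{D}}(x\le y)\le\frac12\}$. Then for all $n,m$ and every preference profile $\sigma$ on $n$ voters and $m$ alternatives, the alternative $f(\sigma)$ selected by binomial voting satisfies $\mathbb{E}[\mathrm{sw}(f(\sigma),u)]\ge\frac{\nu}{2}\max_{j\in A}\mathbb{E}[\mathrm{sw}(j,u)]$; i.e., binomial voting is a $\frac{\nu}{2}$-expected-welfare-maximizing rule for $\mathcal{D}$.
   Context: There are $n$ voters and $m$ alternatives $A=\{1,\dots,m\}$. A preference profile $\sigma$ consists of a ranking of $A$ for each voter; position $1$ is the top. Given $\mathcal{D}$ and $\sigma$, a random utility profile $u$ consistent with $\sigma$ is generated as follows: independently for each voter $i$, draw $m$ i.i.d. samples from $\mathcal{D}$ and assign them, from highest to lowest, to the alternatives in the order of voter $i$'s ranking. The social welfare of $j$ is $\mathrm{sw}(j,u)=\sum_i u_{ij}$; expectations are over $u$. Binomial voting is the scoring rule in which each voter gives $\sum_{\ell=k}^m\binom{m}{\ell}$ points to the alternative she ranks in position $k$; it selects an alternative with the largest total score (ties broken arbitrarily). *)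

(* Defs.v *)
From HB Require Import structures.
From mathcomp Require Import all_boot all_order all_algebra all_fingroup.
From mathcomp Require Import all_classical all_reals all_analysis.
Set Implicit Arguments. Unset Strict Implicit. Unset Printing Implicit Defensive.
Import Order.TTheory GRing.Theory Num.Theory.
Local Open Scope classical_set_scope.
Local Open Scope ring_scope.

(* Positions are 0-indexed: position p (0 <= p < m) is the paper's position p+1.
   A ranking of voter i is a permutation  sigma i : {perm 'I_m}  mapping a
   position p to the alternative ranked at position p (sigma i ord0 is the top). *)
Definition profile (n m : nat) := 'I_n -> {perm 'I_m}.

Definition pos n m (sigma : profile n m) (i : 'I_n) (j : 'I_m) : 'I_m :=
  ((sigma i)^-1)%g j.

Definition binom_points (m p : nat) : nat := \sum_(p.+1 <= l < m.+1) 'C(m, l).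

Definition binom_score n m (sigma : profile n m) (j : 'I_m) : nat :=
  \sum_(i < n) binom_points m (pos sigma i j).

(* f(sigma) = j is a possible output of binomial voting (ties arbitrary). *)
Definition binomial_winner n m (sigma : profile n m) (j : 'I_m) : Prop :=
  forall j' : 'I_m, (binom_score sigma j' <= binom_score sigma j)%N.

(* Random utility profile: voter i has m samples X i 0, ..., X i (m-1);
   the k-th largest of them (k 0-indexed) is assigned to alternative sigma i k. *)
Definition utility {R : realType} {T : Type} n m (sigma : profile n m)
  (X : 'I_n -> 'I_m -> T -> R) (i : 'I_n) (j : 'I_m) (w : T) : R :=
  nth 0 (sort (fun a b : R => b <= a) [seq X i l w | l <- enum 'I_m])
      (pos sigma i j).

Definition sw {R : realType} {T : Type} n m (sigma : profile n m)
  (X : 'I_n -> 'I_m -> T -> R) (j : 'I_m) (w : T) : R :=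
  \sum_(i < n) utility sigma X i j w.

Definition largest_median {R : realType} (D : probability R R) : R :=
  sup [set y : R | (D [set x : R | (x <= y)%R] <= (2^-1)%:E)%E].

(* The n*m samples are mutually independent (product rule on every family of
   Borel sets, which covers all finite subfamilies by taking setT elsewhere). *)
Definition iid_samples {R : realType} {d : measure_display} {Om : measurableType d}
  (P : probability Om R) (D : probability R R) n m (X : 'I_n -> 'I_m -> Om -> R) : Prop :=
  (forall i l, measurable_fun setT (X i l)) /\
  (forall i l (B : set R), measurable B -> P (X i l @^-1` B) = D B) /\
  (forall B : 'I_n -> 'I_m -> set R, (forall i l, measurable (B i l)) ->
     P (\bigcap_(i in setT) \bigcap_(l in setT) (X i l @^-1` B i l)) =
     (\prod_(i < n) \prod_(l < m) P (X i l @^-1` B i l))%E).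

(* Main.v *)
Require Import Defs.
From HB Require Import structures.
From mathcomp Require Import all_boot all_order all_algebra all_fingroup.
From mathcomp Require Import all_classical all_reals all_analysis.
From mathcomp Require Import ring lra zify measurable_realfun.
Import Order.TTheory GRing.Theory Num.Theory.
Set Implicit Arguments. Unset Strict Implicit. Unset Printing Implicit Defensive.

Lemma points_card m k :
  binom_points m k = #|[set S : {set 'I_m} | k < #|S|]|.
Proof.
rewrite /binom_points big_geq_mkord.
rewrite -sum1_card.
have -> : \sum_(S in [set S : {set 'I_m} | k < #|S|]) 1 =
          \sum_(S : {set 'I_m}) \sum_(l < m.+1 | k < l) (l == #|S| :> nat).
  rewrite big_mkcond /=; apply: eq_bigr => S _.
  rewrite big_mkcond /=.
  rewrite (eq_bigr (fun l : 'I_m.+1 => if (l == #|S| :> nat) then (if k < l then 1 else 0) else 0)); last first.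
    by move=> l _; case: (k < l); case: (l == #|S| :> nat).
  rewrite -big_mkcond /= (big_ord1_eq _ (fun l => if k < l then 1 else 0)).
  by rewrite ltnS (leq_trans (max_card _)) ?card_ord // inE.
rewrite [RHS]exchange_big /=; apply: eq_big => [l|l _] //.
rewrite -{1}(card_ord m) -card_draws -sum1_card.
by rewrite big_mkcond [RHS]big_mkcond /=; apply: eq_bigr => S _; rewrite inE eq_sym; case: (_ == _).
Qed.


Lemma sum_lt_min m c : \sum_(p < m) (p < c : nat) = minn c m.
Proof.
elim: m => [|m IH]; first by rewrite big_ord0 minn0.
rewrite big_ord_recr /= IH.
case: (ltnP m c) => h /=; lia.
Qed.

Lemma sum_points m : \sum_(p < m) binom_points m p = \sum_(S : {set 'I_m}) #|S|.
Proof.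
under eq_bigr => p _ do rewrite points_card -sum1_card big_mkcond /=.
rewrite exchange_big /=; apply: eq_bigr => S _.
rewrite -[RHS](minn_idPl (leq_trans (max_card (mem S)) (eq_leq (card_ord m)))).
rewrite -sum_lt_min; apply: eq_bigr => p _; rewrite inE; by case: (_ < _).
Qed.

Lemma sum_card_sets m : 2 * \sum_(S : {set 'I_m}) #|S| = m * 2 ^ m.
Proof.
have e : \sum_(S : {set 'I_m}) #|S| = \sum_(S : {set 'I_m}) #|~: S|.
  by rewrite (reindex_inj (@finset.setC_inj _)).
rewrite mul2n -addnn {2}e -big_split /=.
under eq_bigr => S _ do rewrite cardsC card_ord.
rewrite sum_nat_const -cardsT -powersetT card_powerset cardsT card_ord.
by rewrite mulnC.
Qed.

Lemma winner_bound n m (sigma : profile n m) (jstar : 'I_m) :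
  binomial_winner sigma jstar -> n * 2 ^ m <= 2 * binom_score sigma jstar.
Proof.
move=> Hw.
have m0 : 0 < m by case: m sigma jstar Hw => [|//] ? [].
have tot : \sum_(j < m) binom_score sigma j = n * \sum_(p < m) binom_points m p.
  rewrite /binom_score exchange_big /=.
  rewrite -[n in RHS]card_ord -sum_nat_const; apply: eq_bigr => i _.
  rewrite (reindex_inj (@perm_inj _ (sigma i))) /=.
  by apply: eq_bigr => p _; rewrite /pos permK.
have le : \sum_(j < m) binom_score sigma j <= m * binom_score sigma jstar.
  rewrite -[m in m * _]card_ord -sum_nat_const; exact: leq_sum.
rewrite -(leq_pmul2l m0).
apply: leq_trans (_ : 2 * \sum_(j < m) binom_score sigma j <= _); last first.
  by rewrite mulnCA leq_mul2l le orbT.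
rewrite tot sum_points.
by rewrite [2 * _]mulnCA sum_card_sets mulnCA.
Qed.

Local Open Scope classical_set_scope.
Local Open Scope ring_scope.

Lemma binom_ineq (R : realType) m k (w : {set 'I_m} -> R) :
  (forall S S' : {set 'I_m}, (#|S| <= #|S'|)%N -> w S <= w S') ->
  \sum_(S : {set 'I_m}) w S = 1 ->
  #|[set S : {set 'I_m} | (k < #|S|)%N]%SET|%:R / (2 ^ m)%:R <= \sum_(S : {set 'I_m} | (k < #|S|)%N) w S.
Proof.
move=> mono tot.
set c : R := 1 / (2 ^ m)%:R.
have N0 : (2 ^ m)%:R != 0 :> R by rewrite pnatr_eq0 expn_eq0.
have totc : \sum_(S : {set 'I_m}) c = 1.
  rewrite sumr_const -cardsT -powersetT card_powerset cardsT card_ord.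
  by rewrite /c div1r -[_ *+ _]mulr_natr mulVf.
have -> : #|[set S : {set 'I_m} | (k < #|S|)%N]%SET|%:R / (2 ^ m)%:R = \sum_(S : {set 'I_m} | (k < #|S|)%N) c.
  by rewrite sumr_const cardsE /c div1r mulrC mulr_natr.
rewrite -subr_ge0 -sumrB.
have [[S0 HS0 HwS0]|nex] := pselect (exists2 S0 : {set 'I_m}, (k < #|S0|)%N & w S0 < c).
  have e : \sum_(S : {set 'I_m} | (k < #|S|)%N) (w S - c) = - \sum_(S : {set 'I_m} | ~~ (k < #|S|)%N) (w S - c).
    have h0 : \sum_(S : {set 'I_m}) (w S - c) = 0 by rewrite sumrB tot totc subrr.
    rewrite (bigID (fun S : {set 'I_m} => (k < #|S|)%N)) /= in h0.
    by apply/eqP; rewrite -addr_eq0 h0.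
  rewrite e oppr_ge0; apply: sumr_le0 => S; rewrite -leqNgt => HS.
  rewrite subr_le0; apply: ltW; apply: le_lt_trans HwS0; apply: mono.
  exact: leq_trans HS (ltnW HS0).
apply: sumr_ge0 => S HS; rewrite subr_ge0; rewrite leNgt; apply/negP => h.
by apply: nex; exists S.
Qed.

Lemma weight_mono (R : realType) m (p : R) : 1/2 <= p <= 1 ->
  forall S S' : {set 'I_m}, (#|S| <= #|S'|)%N ->
  \prod_l (if l \in S then p else 1 - p) <= \prod_l (if l \in S' then p else 1 - p).
Proof.
move=> /andP[p1 p2].
have wE (S : {set 'I_m}) : \prod_l (if l \in S then p else 1 - p) = p ^+ #|S| * (1 - p) ^+ (m - #|S|).
  rewrite (bigID (fun l => l \in S)) /=.
  rewrite (eq_bigr (fun=> p)); last by move=> l ->.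
  rewrite [X in _ * X](eq_bigr (fun=> 1 - p)); last by move=> l /negPf ->.
  rewrite !prodr_const; congr (_ * _ ^+ _).
  have h := cardC (mem S); rewrite card_ord in h.
  have e : #|(fun i : 'I_m => i \notin S)| = #|[predC (mem S)]| by apply: eq_card.
  have h' : (#|S| + #|[predC mem S]| = m)%N := h.
  rewrite e; apply/eqP; rewrite -(eqn_add2l #|S|) subnKC ?h' //.
  exact: leq_trans (max_card _) (eq_leq (card_ord m)).
move=> S S' le; rewrite !wE.
have hS : (#|S'| <= m)%N by exact: leq_trans (max_card _) (eq_leq (card_ord m)).
move: le hS; move: #|S| #|S'| => a b ab bm.
have -> : (m - a)%N = ((b - a) + (m - b))%N by lia.
have -> : b = (a + (b - a))%N by lia.
rewrite addKn !exprD -mulrA.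
apply: ler_wpM2l; first by apply: exprn_ge0; lra.
apply: ler_wpM2r; first by apply: exprn_ge0; lra.
apply: lerXn2r; rewrite ?nnegrE; lra.
Qed.


Lemma nth_sorted_gt (R : realType) (t : R) (s : seq R) k :
  sorted (fun a b : R => b <= a) s -> (k < size s)%N ->
  (t < nth 0 s k) = (k < count (fun x : R => (t < x)%R) s)%N.
Proof.
elim: s k => [//|x s IH] k /= srt ks.
have srt' : sorted (fun a b : R => b <= a) s := path_sorted srt.
have allx : all (fun y => y <= x) s.
  have tr : transitive (fun a b : R => b <= a).
    by move=> y x' z h1 h2; exact: le_trans h2 h1.
  exact: order_path_min tr srt.
case: k ks => [|k] ks /=.
  case: (ltrP t x) => h; first by rewrite add1n.
  rewrite add0n; apply/esym/negbTE; rewrite -leqNgt leqn0 -/(nilp _) eqn0Ngt -has_count.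
  apply/hasPn => y ys; rewrite -leNgt; apply: le_trans h; exact: (allP allx).
rewrite IH //; case: (ltrP t x) => h; first by rewrite add1n ltnS.
have -> : count (fun x0 : R => t < x0) s = 0%N.
  apply/eqP; rewrite -leqn0 leqNgt -has_count; apply/hasPn => y ys.
  rewrite -leNgt; apply: le_trans h; exact: (allP allx).
by [].
Qed.

Lemma nth_sorted_mem (R : realType) (s : seq R) k : (k < size s)%N -> nth 0 s k \in s.
Proof. exact: mem_nth. Qed.


Definition fsetX {R T : Type} n m (X : 'I_n -> 'I_m -> T -> R) (i : 'I_n)
  (A : set R) (w : T) : {set 'I_m} := [set l | `[< A (X i l w) >]].

Definition Bsets {R : Type} n m (i : 'I_n) (A : set R) (S : {set 'I_m}) :
  'I_n -> 'I_m -> set R :=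
  fun i' l => if i' == i then (if l \in S then A else ~` A) else setT.

Definition ES {R T : Type} n m (X : 'I_n -> 'I_m -> T -> R) (i : 'I_n)
  (A : set R) (S : {set 'I_m}) : set T :=
  \bigcap_(i' in setT) \bigcap_(l in setT) (X i' l @^-1` Bsets i A S i' l).

Lemma ES_E {R T : Type} n m (X : 'I_n -> 'I_m -> T -> R) i A S :
  ES X i A S = [set w | fsetX X i A w = S].
Proof.
rewrite predeqE => w; split.
  move=> h; apply/setP => l; rewrite inE.
  have := h i I l I; rewrite /Bsets eqxx /=.
  by case: (l \in S) => H; [apply/asboolP | apply/asboolPn].
move=> /= <- i' _ l _; rewrite /Bsets /=.
case: eqP => [->|//].
rewrite inE; case: (asboolP (A (X i l w))) => //.
Qed.

Lemma ES_P {R T : Type} n m (X : 'I_n -> 'I_m -> T -> R) i A S w :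
  ES X i A S w <-> fsetX X i A w = S.
Proof. by rewrite ES_E. Qed.

Lemma measurable_ES {R : realType} d (T : measurableType d) n m
  (X : 'I_n -> 'I_m -> T -> R) i (A : set R) S :
  (forall i l, measurable_fun setT (X i l)) -> measurable A ->
  measurable (ES X i A S).
Proof.
move=> mX mA; apply: fin_bigcap_measurable; first exact: finite_finset.
move=> i' _; apply: fin_bigcap_measurable; first exact: finite_finset.
move=> l _; rewrite -[X in measurable X]setTI; apply: mX => //.
rewrite /Bsets; case: (i' == i) => //; case: (l \in S) => //.
exact: measurableC.
Qed.

Lemma prob_ES {R : realType} (D : probability R R) n m d (Om : measurableType d)
  (P : probability Om R) (X : 'I_n -> 'I_m -> Om -> R) (HX : iid_samples P D X)
  (i : 'I_n) (A : set R) (mA : measurable A) (S : {set 'I_m}) :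
  P (ES X i A S) = (\prod_(l < m) (if l \in S then D A else D (~` A)))%E.
Proof.
case: HX => mX [law prod].
rewrite /ES prod; last first.
  move=> i' l; rewrite /Bsets; case: (i' == i) => //; case: (l \in S) => //.
  exact: measurableC.
rewrite (bigD1 i) //=.
rewrite [X in (_ * X)%E]big1 ?mule1; last first.
  move=> i' /negPf ne; apply: big1 => l _.
  by rewrite /Bsets ne law // probability_setT.
apply: eq_bigr => l _; rewrite law /Bsets eqxx; last first.
  by case: (l \in S) => //; exact: measurableC.
by case: (l \in S).
Qed.

Lemma prob_pred {R : realType} d (Om : measurableType d)
  (P : probability Om R) n m (X : 'I_n -> 'I_m -> Om -> R)
  (mX : forall i l, measurable_fun setT (X i l))
  (i : 'I_n) (A : set R) (mA : measurable A) (Q : pred {set 'I_m}) :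
  P [set w | Q (fsetX X i A w)] = (\sum_(S : {set 'I_m} | Q S) P (ES X i A S))%E.
Proof.
have -> : [set w | Q (fsetX X i A w)] = \bigcup_(S in [set S | Q S]) ES X i A S.
  rewrite predeqE => w; split.
    by move=> h; exists (fsetX X i A w) => //; apply/ES_P.
  by case=> S /= QS /ES_P ->.
rewrite (measure_fin_bigcup P) //; first last.
- by move=> S _; exact: measurable_ES.
- by move=> S S' _ _ [w [/ES_P <- /ES_P <-]].
- exact: finite_finset.
rewrite (fsbigE [seq S <- enum {set 'I_m} | Q S]).
- rewrite -big_filter -filter_predI (@eq_filter _ _ Q); last first.
    by move=> S /=; case: (boolP (Q S)) => QS; rewrite ?andbF ?andbT //; apply/mem_set.
  by rewrite big_filter big_enum_cond.
- by rewrite filter_uniq // enum_uniq.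
- by move=> S /=; rewrite mem_filter => /andP[].
- by move=> S /= QS; rewrite mem_filter QS mem_enum.
Qed.


Lemma le_setE (R : realType) (y : R) : [set x : R | x <= y] = `]-oo, y]%classic.
Proof. by rewrite predeqE => x; rewrite /= in_itv. Qed.

Lemma unit_setE (R : realType) : [set x : R | 0 <= x <= 1] = `[0, 1]%classic.
Proof. by rewrite predeqE => x; rewrite /= in_itv. Qed.

Lemma median_facts (R : realType) (D : probability R R)
  (D_supp : D [set x : R | (0 <= x <= 1)%R] = 1%E) :
  0 <= largest_median D /\
  forall t, t < largest_median D -> ((2^-1)%:E <= D `]t, +oo[%classic)%E.
Proof.
set E := [set y : R | (D [set x : R | (x <= y)%R] <= (2^-1)%:E)%E].
have neg (y : R) : y < 0 -> E y.
  move=> y0; rewrite /E /=.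
  apply: (@le_trans _ _ (D (~` [set x : R | (0 <= x <= 1)%R]))).
    apply: le_measure; rewrite ?inE.
    - by rewrite le_setE; exact: measurable_itv.
    - by rewrite unit_setE; apply: measurableC; exact: measurable_itv.
    - move=> x /= xy /andP[x0 _]; clear -xy x0 y0; lra.
  rewrite probability_setC ?D_supp ?subee //; last by rewrite unit_setE; exact: measurable_itv.
have ub (y : R) : E y -> y < 1.
  rewrite /E /= => h; rewrite ltNge; apply/negP => y1.
  have : (1 <= D [set x : R | (x <= y)%R])%E.
    rewrite -D_supp; apply: le_measure; rewrite ?inE.
    - by rewrite unit_setE; exact: measurable_itv.
    - by rewrite le_setE; exact: measurable_itv.
    - move=> x /= /andP[_ x1]; clear -x1 y1; lra.
  move=> h2; have := le_trans h2 h; rewrite lee_fin; clear; lra.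
have hs : has_sup E.
  split; first by exists (-1); apply: neg; lra.
  by exists 1 => y /ub /ltW.
split.
  rewrite /largest_median -/E; rewrite leNgt; apply/negP => h.
  have h2 : sup E / 2 < 0 by clear -h; lra.
  have := sup_upper_bound hs (neg _ h2); clear -h; lra.
move=> t; rewrite /largest_median -/E => tlt.
have hpos : 0 < sup E - t by clear -tlt; lra.
have [y Ey hy] := sup_adherent hpos hs.
have {}hy : t < y by move: hy; clear -tlt; lra.
have : (D [set x : R | (x <= t)%R] <= (2^-1)%:E)%E.
  apply: le_trans Ey; apply: le_measure; rewrite ?inE.
  - by rewrite le_setE; exact: measurable_itv.
  - by rewrite le_setE; exact: measurable_itv.
  - move=> x /= xt; clear -xt hy; lra.
have -> : `]t, +oo[%classic = ~` [set x : R | (x <= t)%R].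
  by rewrite predeqE => x; rewrite /= in_itv /= andbT ltNge; split => /negP.
rewrite probability_setC; last by rewrite le_setE; exact: measurable_itv.
move: (D [set x | x <= t]) (measure_ge0 D [set x | x <= t]) => [r| |] //= r0.
rewrite !lee_fin; clear; lra.
Qed.


Lemma card_count (T : finType) (a : pred T) : #|[set x | a x]%SET| = count a (enum T).
Proof. by rewrite cardE enumT /enum_mem size_filter; apply: eq_count => x; rewrite /= inE. Qed.



Lemma voter_bound (R : realType) (D : probability R R) n m d (Om : measurableType d)
  (P : probability Om R) (X : 'I_n -> 'I_m -> Om -> R) (HX : iid_samples P D X)
  (i : 'I_n) (t : R) (ht : ((2^-1)%:E <= D `]t, +oo[%classic)%E) (k : nat) :
  (((binom_points m k)%:R / (2 ^ m)%:R)%:E <=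
    P [set w | (k < #|fsetX X i `]t, +oo[%classic w|)%N])%E.
Proof.
have mA : measurable (`]t, +oo[%classic : set R) by exact: measurable_itv.
have mX := HX.1.
rewrite (prob_pred P mX i mA (fun S => (k < #|S|)%N)).
under eq_bigr => S _ do rewrite (prob_ES HX i mA S).
have fA : D `]t, +oo[%classic \is a fin_num by rewrite fin_num_measure.
set p := fine (D `]t, +oo[%classic).
have eA : D `]t, +oo[%classic = p%:E by rewrite /p fineK.
have eC : D (~` `]t, +oo[%classic) = (1 - p)%:E by rewrite probability_setC // eA.
have hp : 2^-1 <= p <= 1.
  apply/andP; split; first by rewrite -lee_fin -eA.
  by rewrite -lee_fin -eA probability_le1.
have eS (S : {set 'I_m}) : (\prod_(l < m) (if l \in S then D `]t, +oo[%classic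
      else D (~` `]t, +oo[%classic)))%E = (\prod_(l < m) (if l \in S then p else 1 - p))%:E.
  by rewrite -prodEFin; apply: eq_bigr => l _; case: (l \in S).
under eq_bigr => S _ do rewrite eS.
rewrite sumEFin lee_fin points_card.
have hp' : 1/2 <= p <= 1 by move: hp; rewrite div1r.
apply: binom_ineq; first exact: weight_mono.
have := prob_pred P mX i mA (fun S => true).
under eq_bigr => S _ do rewrite (prob_ES HX i mA S) eS.
rewrite sumEFin.
have -> : [set w | true] = [set: Om] by rewrite predeqE.
by rewrite probability_setT => -[].
Qed.

Lemma util_gt (R : realType) T n m (sigma : profile n m) (X : 'I_n -> 'I_m -> T -> R)
  i j w (t : R) :
  (t < utility sigma X i j w) = (pos sigma i j < #|fsetX X i `]t, +oo[%classic w|)%N.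
Proof.
have tot : total (fun a b : R => b <= a) by move=> a b; rewrite orbC le_total.
rewrite /utility nth_sorted_gt ?sort_sorted //; last first.
  by rewrite size_sort size_map size_enum_ord.
have pe := perm_sort (fun a b : R => b <= a) [seq X i l w | l <- enum 'I_m].
have pe' : perm_eq (sort (fun a b : R => b <= a) [seq X i l w | l <- enum 'I_m])
    [seq X i l w | l <- enum 'I_m] by rewrite pe perm_refl.
rewrite (elimT seq.permP pe') count_map /fsetX card_count.
congr (_ < _)%N; apply: eq_count => l /=.
by rewrite asboolb in_itv /= andbT.
Qed.

Lemma util_mem (R : realType) T n m (sigma : profile n m) (X : 'I_n -> 'I_m -> T -> R)
  i j w : exists l, utility sigma X i j w = X i l w.
Proof.
have : utility sigma X i j w \in [seq X i l w | l <- enum 'I_m].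
  rewrite /utility -(mem_sort (fun a b : R => b <= a)); apply: mem_nth.
  by rewrite size_sort size_map size_enum_ord.
by case/mapP => l _ ->; exists l.
Qed.

Lemma measurable_pred (R : realType) d (Om : measurableType d) n m
  (X : 'I_n -> 'I_m -> Om -> R) (mX : forall i l, measurable_fun setT (X i l))
  (i : 'I_n) (A : set R) (mA : measurable A) (Q : pred {set 'I_m}) :
  measurable [set w | Q (fsetX X i A w)].
Proof.
have -> : [set w | Q (fsetX X i A w)] = \bigcup_(S in [set S | Q S]) ES X i A S.
  rewrite predeqE => w; split.
    by move=> h; exists (fsetX X i A w) => //; apply/ES_P.
  by case=> S /= QS /ES_P ->.
apply: fin_bigcup_measurable; first exact: finite_finset.
by move=> S _; exact: measurable_ES.
Qed.

Lemma measurable_utility (R : realType) d (Om : measurableType d) n m (sigma : profile n m)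
  (X : 'I_n -> 'I_m -> Om -> R) (mX : forall i l, measurable_fun setT (X i l)) i j :
  measurable_fun setT (utility sigma X i j).
Proof.
apply: (measurability _ (RGenOInfty.measurableE R)) => //.
move=> _ [_ [x ->] <-]; rewrite setTI.
have -> : utility sigma X i j @^-1` `]x, +oo[%classic =
    [set w | (pos sigma i j < #|fsetX X i `]x, +oo[%classic w|)%N].
  by rewrite predeqE => w; rewrite /= -util_gt in_itv /= andbT.
exact: (measurable_pred mX i (measurable_itv _) (fun S => (pos sigma i j < #|S|)%N)).
Qed.


Lemma lim_bound (R : realType) (nu c : R) (I : \bar R) :
  0 <= nu -> 0 <= c -> (0 <= I)%E ->
  (forall t, 0 <= t -> t < nu -> ((t * c)%:E <= I)%E) -> ((nu * c)%:E <= I)%E.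
Proof.
move=> nu0 c0 I0 h.
case: I I0 h => [r| |] //= r0 h; last by rewrite leey.
rewrite lee_fin in r0 *.
have [->|cpos] := eqVneq c 0; first by rewrite mulr0.
have c0' : 0 < c by rewrite lt_def cpos c0.
rewrite leNgt; apply/negP => hr.
have rc : r / c < nu by rewrite ltr_pdivrMr.
have rc0 : 0 <= r / c by rewrite divr_ge0.
set t := (r / c + nu) / 2.
have t0 : 0 <= t by rewrite /t; lra.
have tn : t < nu by rewrite /t; lra.
have := h t t0 tn; rewrite lee_fin.
have -> : t * c = (r + nu * c) / 2 by rewrite /t; field; rewrite cpos.
move: hr; move: (nu * c) => nc hr h2.
have : nc <= r by lra.
by rewrite leNgt -lte_fin hr.
Qed.

Theorem theorem7 (R : realType) (D : probability R R)
  (D_supp : D [set x : R | (0 <= x <= 1)%R] = 1%E)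
  (n m : nat) (sigma : profile n m)
  (d : measure_display) (Om : measurableType d) (P : probability Om R)
  (X : 'I_n -> 'I_m -> Om -> R) (HX : iid_samples P D X)
  (jstar : 'I_m) (Hwin : binomial_winner sigma jstar) :
  (\int[P]_w (sw sigma X jstar w)%:E >=
    (largest_median D / 2)%:E *
      \big[maxe/-oo]_(j < m) \int[P]_w (sw sigma X j w)%:E)%E.
Proof.
have HX' := HX; case: HX' => mX [law prodX].
set nu := largest_median D.
have [nu0 tail] := median_facts D_supp.
set U := [set x : R | (0 <= x <= 1)%R].
have mU : measurable U by rewrite /U unit_setE; exact: measurable_itv.
set G := \bigcap_(i in [set: 'I_n]) \bigcap_(l in [set: 'I_m]) (X i l @^-1` U).
have mG : measurable G.
  apply: fin_bigcap_measurable; first exact: finite_finset. move=> i _.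
  apply: fin_bigcap_measurable; first exact: finite_finset. move=> l _.
  by rewrite -[X in measurable X]setTI; apply: mX.
have PG : P G = 1%E.
  rewrite /G (prodX (fun _ _ => U)) //; apply: big1 => i _; apply: big1 => l _.
  by rewrite law.
have PnG : P (~` G) = 0%E by rewrite probability_setC // PG subee.
have Gb w : G w -> forall i l, 0 <= X i l w <= 1 by move=> Gw i l; exact: (Gw i I l I).
have ub w i j : G w -> 0 <= utility sigma X i j w <= 1.
  by move=> Gw; have [l ->] := util_mem sigma X i j w; exact: Gb.
have mu_ i j := measurable_utility sigma mX i j.
have msw j : measurable_fun setT (sw sigma X j).
  by apply: measurable_sum => i; exact: mu_.
pose swG j w := sw sigma X j w * \1_G w.
have mswG j : measurable_fun setT (swG j).
  by apply: measurable_funM => //; exact: measurable_indic.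
have eqI j : (\int[P]_w (sw sigma X j w)%:E = \int[P]_w (swG j w)%:E)%E.
  apply: ae_eq_integral => //.
  - by apply/measurable_EFinP.
  - by apply/measurable_EFinP.
  - exists (~` G); split => //; first exact: measurableC.
    move=> w /= nh Gw; apply: nh => _.
    by rewrite /swG indicE mem_set // mulr1.
have swG_b j w : 0 <= swG j w <= n%:R.
  rewrite /swG indicE; case: (boolP (w \in G)) => [/set_mem Gw|_]; last first.
    by rewrite mulr0 lexx ler0n.
  rewrite mulr1 /sw; apply/andP; split.
    by apply: sumr_ge0 => i _; case/andP: (ub w i j Gw).
  rewrite -[X in X%:R](card_ord n) -sumr_const; apply: ler_sum => i _.
  by case/andP: (ub w i j Gw).
have upper j : (\int[P]_w (sw sigma X j w)%:E <= n%:R%:E)%E.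
  rewrite eqI.
  have -> : (n%:R%:E = \int[P]_w (n%:R)%:E :> \bar R)%E.
    rewrite integral_cst //; rewrite -[X in X = _]mule1; congr (_ * _)%E; exact/esym/probability_setT.
    apply: ge0_le_integral => //.
    - by move=> w _; rewrite lee_fin; case/andP: (swG_b j w).
    - by apply/measurable_EFinP.
    - move=> w _; rewrite lee_fin; by case/andP: (swG_b j w).
have maxle : (\big[maxe/-oo]_(j < m) \int[P]_w (sw sigma X j w)%:E <= n%:R%:E)%E.
  elim/big_ind: _ => //; first exact: leNye.
  by move=> x y hx hy; rewrite ge_max hx hy.
have I0 : (0 <= \int[P]_w (sw sigma X jstar w)%:E)%E.
  rewrite eqI; apply: integral_ge0 => w _; rewrite lee_fin.
  by case/andP: (swG_b jstar w).
have lower : ((nu * (n%:R / 2))%:E <= \int[P]_w (sw sigma X jstar w)%:E)%E.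
  apply: lim_bound => //.
  move=> t t0 tnu.
  have ht := tail t tnu.
  pose A i := [set w | (pos sigma i jstar < #|fsetX X i `]t, +oo[%classic w|)%N].
  have mA i : measurable (A i).
    exact: (measurable_pred mX i (measurable_itv _) (fun S => (pos sigma i jstar < #|S|)%N)).
  have vb i := voter_bound HX i ht (pos sigma i jstar).
  pose f1 w := (t * \sum_(i < n) \1_(A i) w)%:E.
  have mf1 : measurable_fun setT f1.
    apply/measurable_EFinP; apply: measurable_funM => //.
    by apply: measurable_sum => i; exact: measurable_indic.
  have f10 w : (0 <= f1 w)%E.
    by rewrite lee_fin mulr_ge0 // sumr_ge0 // => i _; rewrite indicE ler0n.
  have intf1 : (\int[P]_w f1 w = t%:E * \sum_(i < n) P (A i))%E.
    rewrite /f1; under eq_integral do rewrite EFinM -sumEFin.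
    rewrite ge0_integralZl_EFin //; last first.
      by apply: emeasurable_sum => i; apply/measurable_EFinP; exact: measurable_indic.
      by move=> w _; apply: sume_ge0 => i _; rewrite lee_fin indicE ler0n.
    congr (_ * _)%E; rewrite ge0_integral_sum //.
    all: try (by move=> i; apply/measurable_EFinP; exact: measurable_indic).
    all: try (by move=> i w _; rewrite lee_fin indicE ler0n).
    by apply: eq_bigr => i _; rewrite integral_indic // setIT.
  have step4 : (\int[P]_w f1 w <= \int[P]_w (sw sigma X jstar w)%:E)%E.
    rewrite eqI; apply: ae_ge0_le_integral => //.
    - by move=> w _; rewrite lee_fin; case/andP: (swG_b jstar w).
    - by apply/measurable_EFinP.
    - exists (~` G); split => //; first exact: measurableC.
      move=> w /= nh Gw; apply: nh => _.
      rewrite /swG indicE mem_set // mulr1 /f1 lee_fin /sw mulr_sumr.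
      apply: ler_sum => i _; rewrite indicE.
      case: (boolP (w \in A i)) => [/set_mem hA|_].
        by rewrite mulr1; apply: ltW; rewrite util_gt; exact: hA.
      by rewrite mulr0; case/andP: (ub w i jstar Gw).
  apply: le_trans step4; rewrite intf1.
  have hsum : ((n%:R / 2)%:E <= \sum_(i < n) P (A i))%E.
    apply: (@le_trans _ _ (\sum_(i < n) ((binom_points m (pos sigma i jstar))%:R / (2^m)%:R)%:E)%E); last first.
      by apply: lee_sum => i _; exact: vb i.
    rewrite sumEFin lee_fin -mulr_suml -natr_sum.
    have hw := winner_bound Hwin.
    rewrite /binom_score in hw.
    move: hw; set s := (\sum_(i < n) binom_points m (pos sigma i jstar))%N => hw.
    have q0 : 0 < (2 ^ m)%:R :> R by rewrite ltr0n expn_gt0.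
    rewrite ler_pdivlMr //.
    move: hw; rewrite -(ler_nat R) !natrM => hw.
    have -> : n%:R / 2 * (2 ^ m)%:R = n%:R * (2 ^ m)%:R / 2 :> R by rewrite mulrAC.
    move: hw; move: (n%:R * (2 ^ m)%:R) => nq hw; lra.
  rewrite EFinM; apply: lee_wpmul2l => //; by rewrite lee_fin.
apply: le_trans lower.
apply: (@le_trans _ _ ((nu / 2)%:E * n%:R%:E)%E).
  by apply: lee_wpmul2l => //; rewrite lee_fin divr_ge0.
by rewrite -EFinM lee_fin mulrCA mulrA [X in X <= _]mulrC mulrA.
Qed.
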